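(* Let $H:\mathbb{R}^2\to\mathbb{R}$ satisfy (C3), (CNH) and (CVX). Then: (UC) for every $h\in\mathbb{R}$ there exists $\mathcal{U}_h\in\mathbb{R}$ such that for all $(x,u)\in\mathbb{R}^2$, if $|H(x,u)|\le h$ then $|u|\le\mathcal{U}_h$; and (WGNL) for a.e. $x\in\mathbb{R}$ the set $\{w\in\mathbb{R}:\partial^2_{ww}H(x,w)=0\}$ has empty interior.
   Context: (C3) $H\in C^3(\mathbb{R}^2;\mathbb{R})$; (CNH) there exists $X>0$ such that $\partial_xH(x,p)=0$ for all $p$ whenever $|x|\ge X$; (CVX) for every $x\in\mathbb{R}$, $p\mapsto\partial_pH(x,p)$ is an increasing $C^1$-diffeomorphism of $\mathbb{R}$ onto itself. *)

(* Defs.v *)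
From HB Require Import structures.
From mathcomp Require Import all_boot all_order all_algebra.
From mathcomp Require Import all_classical all_reals all_analysis.
Set Implicit Arguments. Unset Strict Implicit. Unset Printing Implicit Defensive.
Import Order.TTheory GRing.Theory Num.Theory.
Import numFieldNormedType.Exports.
Local Open Scope classical_set_scope.
Local Open Scope ring_scope.

Section Defs.
Variable R : realType.

Definition dx (f : R -> R -> R) : R -> R -> R :=
  fun x p => derive1 (fun y => f y p) x.
Definition dp (f : R -> R -> R) : R -> R -> R :=
  fun x p => derive1 (fun q => f x q) p.

Definition has_partials (f : R -> R -> R) : Prop :=
  (forall x p, derivable (fun y => f y p) x 1) /\
  (forall x p, derivable (fun q => f x q) p 1).

Fixpoint Ck (k : nat) (f : R -> R -> R) : Prop :=
  continuous (fun z : R * R => f z.1 z.2) /\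
  match k with
  | 0%N => True
  | k'.+1 => has_partials f /\ Ck k' (dx f) /\ Ck k' (dp f)
  end.

Definition C1 (g : R -> R) : Prop :=
  (forall x, derivable g x 1) /\ continuous (derive1 g).

Definition incr_C1_diffeo (g : R -> R) : Prop :=
  {mono g : a b / a < b} /\ C1 g /\
  exists ginv : R -> R, cancel g ginv /\ cancel ginv g /\ C1 ginv.

Definition C3 (H : R -> R -> R) : Prop := Ck 3 H.
Definition CNH (H : R -> R -> R) : Prop :=
  exists X : R, 0 < X /\ forall x p, X <= `|x| -> dx H x p = 0.
Definition CVX (H : R -> R -> R) : Prop :=
  forall x, incr_C1_diffeo (fun p => dp H x p).

Definition UC (H : R -> R -> R) : Prop :=
  forall h : R, exists U : R, forall x u, `|H x u| <= h -> `|u| <= U.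
Definition WGNL (H : R -> R -> R) : Prop :=
  {ae (@lebesgue_measure R), forall x : R,
     (interior [set w : R | dp (dp H) x w = 0]) = set0}.
End Defs.

(* Main.v *)
Require Import Defs.
From mathcomp Require Import all_boot all_order all_algebra.
From mathcomp Require Import all_classical all_reals all_analysis.
From mathcomp Require Import lra.
Import Order.TTheory GRing.Theory Num.Theory.
Import numFieldNormedType.Exports.
Local Open Scope classical_set_scope.
Local Open Scope ring_scope.

Lemma mvt_aux (R : realType) (f : R -> R) (a b : R) :
  (forall x, derivable f x 1) -> a <= b ->
  exists2 c, a <= c <= b & f b - f a = derive1 f c * (b - a).
Proof.
move=> fd ab.
have h1 : forall x, x \in `]a, b[%R -> is_derive x 1 f (derive1 f x).
  by move=> x _; rewrite derive1E; exact/derivableP.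
have h2 : {within `[a, b], continuous f}.
  apply: continuous_subspaceT => x; exact/differentiable_continuous/derivable1_diffP.
have [c cab e] := MVT_segment ab h1 h2.
by exists c => //; rewrite in_itv /= in cab.
Qed.

Lemma cont_sec (R : realType) (g : R * R -> R) a :
  continuous g -> continuous (fun x => g (x, a)).
Proof.
move=> gc x.
have := @continuous_comp _ _ _ (fun x => (x,a)) g x; apply; last exact: gc.
exact: (@cvg_pair _ _ _ (nbhs x) (nbhs x) (nbhs a) _ _ _ id (fun _ => a) cvg_id (cvg_cst a)).
Qed.

Arguments mvt_aux {R f a b}.
Arguments cont_sec {R g}.

Theorem proposition2p4 (R : realType) (H : R -> R -> R) :
  C3 H -> CNH H -> CVX H -> UC H /\ WGNL H.
Proof.
move=> [hc [[hpx hpp] [_ [hdpc _]]]] [X [X0 hX]] hcvx.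
have gle : forall x a b, a <= b -> dp H x a <= dp H x b.
  move=> x a b; rewrite le_eqVlt => /orP[/eqP->//|ab].
  by have [gm _] := hcvx x; apply/ltW; rewrite gm.
split; last first.
  apply: aeW => x.
  have [gmono [[gd _] _]] := hcvx x.
  apply/seteqP; split=> [w /nbhs_ballP [e /= e0 he]|//].
  have ab : w <= w + e/2 by rewrite lerDl divr_ge0 // ltW.
  have [c /andP[c1 c2] ec] := mvt_aux gd ab.
  have d0 : derive1 (fun p => dp H x p) c = 0.
    apply: (he c); rewrite -ball_normE /ball_ /= distrC ger0_norm ?subr_ge0 //.
    lra.
  rewrite d0 mul0r in ec.
  have : dp H x w < dp H x (w + e/2) by rewrite gmono ltrDl divr_gt0.
  by rewrite -subr_gt0 ec ltxx.
move=> h.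
have hcl : forall x, exists2 x', -X <= x' <= X & forall u, H x u = H x' u.
  move=> x; case: (lerP X x) => [Xx|xX].
    exists X; first by apply/andP; split; lra.
    move=> u; have [c /andP[c1 c2] e] := mvt_aux (fun y => hpx y u) Xx.
    have : dx H c u = 0 by apply: hX; rewrite ger0_norm //; lra.
    rewrite /dx => d; rewrite d mul0r in e.
    by apply/eqP; rewrite -subr_eq0 e.
  case: (lerP x (-X)) => [xX'|xX'].
    exists (-X); first by apply/andP; split; lra.
    move=> u; have [c /andP[c1 c2] e] := mvt_aux (fun y => hpx y u) xX'.
    have : dx H c u = 0 by apply: hX; rewrite ler0_norm; lra.
    rewrite /dx => d; rewrite d mul0r in e.
    by apply/eqP; rewrite eq_sym -subr_eq0 e.
  by exists x => //; apply/andP; split; lra.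
have hdc : forall a, continuous (fun x => dp H x a).
  by move=> a; exact: (cont_sec a hdpc).
have hHc : forall a, continuous (fun x => H x a).
  by move=> a; exact: (cont_sec a hc).
set F := fun n : nat => [set x | 1 < dp H x n%:R /\ dp H x (- n%:R) < -1].
have : finite_subset_cover setT F `[-X, X].
  have := @segment_compact R (-X) X; rewrite compact_cover; apply.
    move=> n _.
    apply: (@openI _ [set x | 1 < dp H x n%:R] [set x | dp H x (- n%:R) < -1]).
      apply: (@open_comp _ _ (fun x => dp H x n%:R) [set y | 1 < y]).
        by move=> y _; apply: hdc.
      exact: open_gt.
    apply: (@open_comp _ _ (fun x => dp H x (- n%:R)) [set y | y < -1]).
      by move=> y _; apply: hdc.
    exact: open_lt.
  move=> x _.
  have [gmono [_ [gi [gK [Kg _]]]]] := hcvx x.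
  set a := gi 2; set b := gi (-2).
  have hb := archi_boundP (addr_ge0 (normr_ge0 a) (normr_ge0 b)).
  exists (Num.bound (`|a| + `|b|)) => //; split.
    apply: (@lt_le_trans _ _ (dp H x a)); first by rewrite /a Kg; lra.
    apply: gle.
    have := ler_norm a; have := normr_ge0 b; lra.
  apply: (@le_lt_trans _ _ (dp H x b)); last by rewrite /b Kg; lra.
  apply: gle.
  have := ler_norm (- b); rewrite normrN; have := normr_ge0 a; lra.
move=> [D' _ cov].
set N := (\max_(i <- finmap.enum_fset D') i)%N.
set A : R := N%:R.
have A0 : 0 <= A by rewrite /A ler0n.
have hA : forall x, -X <= x <= X -> 1 < dp H x A /\ dp H x (- A) < -1.
  move=> x xr.
  have xi : x \in `[-X, X] by rewrite /= in_itv /= xr.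
  have [n nD [h1 h2]] := cov x xi.
  have nN : (n <= N)%N by apply: (@leq_bigmax_seq _ _ xpredT id).
  have nNr : n%:R <= A :> R by rewrite /A ler_nat.
  split; first exact: (lt_le_trans h1 (gle _ _ _ nNr)).
  apply: (le_lt_trans _ h2); apply: gle; lra.
have XX : -X <= X by lra.
have [c1 c1r m1] := EVT_min XX (continuous_subspaceT (hHc A)).
have [c2 c2r m2] := EVT_min XX (continuous_subspaceT (hHc (- A))).
exists (A + `|h| + `|H c1 A| + `|H c2 (- A)|) => x u.
have [x' xr ->] := hcl x.
have x'i : x' \in `[-X, X] by rewrite in_itv /= xr.
have hm1 := m1 x' x'i; have hm2 := m2 x' x'i.
have [Ag Al] := hA x' xr.
rewrite ler_norml => /andP[hl hu].
have := ler_norm h; have := ler_norm (H c1 A); have := ler_norm (- H c1 A);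
have := ler_norm (H c2 (- A)); have := ler_norm (- H c2 (-A)).
rewrite !normrN => e1 e2 e3 e4 e5.
case: (lerP A u) => [Au|uA].
  have [c /andP[cl cr] e] := mvt_aux (hpp x') Au.
  have dc : 1 <= dp H x' c by apply: (le_trans (ltW Ag)); apply: gle.
  rewrite /dp in dc; rewrite ger0_norm; last lra.
  have : derive1 (fun q => H x' q) c * (u - A) >= u - A.
    have : 0 <= u - A by lra.
    move: (derive1 (fun q => H x' q) c) dc => d dc ua; nra.
  lra.
case: (lerP u (- A)) => [uA'|uA'].
  have [c /andP[cl cr] e] := mvt_aux (hpp x') uA'.
  have dc : dp H x' c <= -1 by apply: (le_trans _ (ltW Al)); apply: gle.
  rewrite /dp in dc; rewrite ler0_norm; last lra.
  have : derive1 (fun q => H x' q) c * (- A - u) <= - (- A - u).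
    have : 0 <= - A - u by lra.
    move: (derive1 (fun q => H x' q) c) dc => d dc ua; nra.
  lra.
have : `|u| <= A by rewrite ler_norml; apply/andP; split; lra.
lra.
Qed.
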